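(* Let $a(z),b(z)\in\mathbb{C}[z,z^{-1}]$, $k\in\mathbb{Z}$, and $\sigma,\tau\in\{-1,1\}$, and let \[ I=\frac{1}{2}\left\|\left(a+\sigma z^k\overline{\widetilde{a}}\right)\left(b+\tau z^k\overline{\widetilde{b}}\right)\right\|_2^2+\frac{1}{2}\left\|\left(\widetilde{a}-\sigma z^k\overline{a}\right)\left(\widetilde{b}-\tau z^k\overline{b}\right)\right\|_2^2. \] Then \[ I=2\|ab\|_2^2+2\|a\widetilde{b}\|_2^2+2\sigma\tau\operatorname{Re}\int a\widetilde{a}\,\overline{b\widetilde{b}}+2\sigma\tau\operatorname{Re}\int z^{-2k}a\widetilde{a}b\widetilde{b}. \]
   Context: For a Laurent polynomial $a(z)=\sum_ja_jz^j\in\mathbb{C}[z,z^{-1}]$: $\widetilde{a}(z)=a(-z)$; $\overline{a}=\overline{a(z)}=\sum_j\overline{a_j}z^{-j}$ (its conjugate on the complex unit circle); $\int a$ denotes the constant coefficient $a_0=\frac{1}{2\pi}\int_0^{2\pi}a(e^{i\theta})d\theta$; and $\|a\|_2^2=\frac{1}{2\pi}\int_0^{2\pi}|a(e^{i\theta})|^2d\theta=\sum_j|a_j|^2$. *)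

(* Defs.v *)
From HB Require Import structures.
From mathcomp Require Import all_boot all_order all_algebra.
From mathcomp Require Import complex.
From mathcomp Require Import boolp classical_sets cardinality fsbigop reals.
Set Implicit Arguments. Unset Strict Implicit. Unset Printing Implicit Defensive.
Import Order.TTheory GRing.Theory Num.Theory.
Local Open Scope ring_scope.
Local Open Scope complex_scope.

Section Laurent.
Variable R : realType.
Local Notation C := R[i].

(* a Laurent polynomial sum_j a_j z^j, given by its coefficients *)
Definition laurent := int -> C.

Definition is_laurent (a : laurent) : Prop := finite_set [set j | a j != 0].

Definition Ladd (a b : laurent) : laurent := fun j => a j + b j.
Definition Lscale (c : C) (a : laurent) : laurent := fun j => c * a j.
Definition Lmul (a b : laurent) : laurent :=
  fun j => (\sum_(i \in [set: int]) a i * b (j - i))%R.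
(* tilde a (z) = a(-z) *)
Definition Ltilde (a : laurent) : laurent := fun j => (-1) ^ j * a j.
(* conjugate on the unit circle: sum_j conj(a_j) z^(-j) *)
Definition Lconj (a : laurent) : laurent := fun j => (a (- j))^*.
(* multiplication by z^k *)
Definition Lshift (k : int) (a : laurent) : laurent := fun j => a (j - k).
(* integral = constant coefficient *)
Definition Lint (a : laurent) : C := a 0.
Definition Lnorm2 (a : laurent) : C :=
  (\sum_(j \in [set: int]) `|a j| ^+ 2)%R.
End Laurent.

(* Main.v *)
Require Import Defs.
From HB Require Import structures.
From mathcomp Require Import all_boot all_order all_algebra.
From mathcomp Require Import complex.
From mathcomp Require Import boolp classical_sets cardinality fsbigop reals.
From mathcomp Require Import ring.
Import Order.TTheory GRing.Theory Num.Theory.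
Local Open Scope ring_scope.
Local Open Scope complex_scope.

Local Open Scope classical_set_scope.
Set Implicit Arguments. Unset Strict Implicit. Unset Printing Implicit Defensive.
Import Order.TTheory GRing.Theory Num.Theory.
Local Open Scope ring_scope.
Local Open Scope complex_scope.
Local Open Scope classical_set_scope.

Lemma expand2 (Rg : comRingType) (S s s' x y x' y' : Rg) : S * S = 1 -> s * s' = 1 ->
  (x + S * (s * y)) * (x' + S * (s' * y')) = x * x' + y * y' + S * (s * y * x' + s' * x * y').
Proof.
move=> hS hs; transitivity (x * x' + (S * S) * (s * s') * (y * y') + S * (s * y * x' + s' * x * y')).
  by ring.
by rewrite hS hs !mul1r.
Qed.

Lemma expand4 (Rg : comRingType) (S T s s' x y x' y' u v u' v' : Rg) : S * S = 1 -> T * T = 1 -> s * s' = 1 ->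
  (x + S * (s * y)) * (u + T * (s * v)) * ((x' + S * (s' * y')) * (u' + T * (s' * v'))) =
  (x * x' + y * y' + S * (s * y * x' + s' * x * y')) * (u * u' + v * v' + T * (s * v * u' + s' * u * v')).
Proof. by move=> hS hT hs; rewrite mulrACA !expand2. Qed.

Lemma combine (Rg : comRingType) (S T s s' A a' ca ca' B b' cb cb' : Rg) :
  (A*ca + ca'*a' + S*(s*ca'*ca + s'*A*a')) * (B*cb + cb'*b' + T*(s*cb'*cb + s'*B*b')) +
  (a'*ca' + ca*A + - S*(s*ca*ca' + s'*a'*A)) * (b'*cb' + cb*B + - T*(s*cb*cb' + s'*b'*B)) =
  (A*ca*(B*cb) + A*ca*(b'*cb') + a'*ca'*(B*cb) + a'*ca'*(b'*cb') + (S*T)*(s*s*(ca*ca'*(cb*cb')) + (s*s')*(ca*ca'*(B*b')) + (s*s')*(A*a'*(cb*cb')) + s'*s'*(A*a'*(B*b')))) + (A*ca*(B*cb) + A*ca*(b'*cb') + a'*ca'*(B*cb) + a'*ca'*(b'*cb') + (S*T)*(s*s*(ca*ca'*(cb*cb')) + (s*s')*(ca*ca'*(B*b')) + (s*s')*(A*a'*(cb*cb')) + s'*s'*(A*a'*(B*b')))).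
Proof. ring. Qed.

Lemma final_id (F : fieldType) (n1 n2 w z wc zc sg tu : F) : (2 : F) != 0 ->
  2^-1 * ((n1 + n2 + n2 + n1 + sg * tu * (zc + wc + w + z)) + (n1 + n2 + n2 + n1 + sg * tu * (zc + wc + w + z)))
  = 2 * n1 + 2 * n2 + 2 * sg * tu * ((w + wc) / 2) + 2 * sg * tu * ((z + zc) / 2).
Proof. by move=> h2; field. Qed.

Section LP.
Variable R : realType.
Local Notation C := R[i].
Local Notation L := (laurent R).

Lemma subsub (i j : int) : j - (j - i) = i.
Proof. by rewrite opprB addrC subrK. Qed.

Definition supp (f : L) := [set j | f j != 0].

Lemma sumT_sub (F : int -> C) (S : set int) :
  (forall i, ~ S i -> F i = 0) ->
  (\sum_(i \in [set: int]) F i)%R = (\sum_(i \in S) F i)%R.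
Proof. by move=> F0; symmetry; apply: fsbig_widen => // i [_ nS]; apply: F0. Qed.

Lemma fin_comp (f : L) (h g : int -> int) : cancel h g ->
  is_laurent f -> is_laurent (fun i => f (h i)).
Proof.
move=> hK fin; apply: (sub_finite_set _ (finite_image g fin)) => i /= fi.
by exists (h i) => //.
Qed.

Lemma fin_set_comp (f : L) (h g : int -> int) : cancel h g ->
  is_laurent f -> finite_set [set i | f (h i) != 0].
Proof. exact: fin_comp. Qed.

Lemma mulE (a b : L) j : Lmul a b j = (\sum_(i \in supp a) a i * b (j - i))%R.
Proof. by rewrite /Lmul (@sumT_sub _ (supp a)) // => i /negP; rewrite negbK => /eqP ->; rewrite mul0r. Qed.

Lemma mulC (a b : L) : Lmul a b = Lmul b a.
Proof.
apply/funext => j; rewrite /Lmul (reindex_fsbigT (fun i => j - i)).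
  by apply: eq_fsbigr => i _; rewrite subsub mulrC.
by exists (fun i => j - i) => i; rewrite subsub.
Qed.

Lemma fin_add (a b : L) : is_laurent a -> is_laurent b -> is_laurent (Ladd a b).
Proof.
move=> ha hb; apply: (@sub_finite_set _ _ (supp a `|` supp b)); last by rewrite finite_setU.
move=> j /=.
rewrite /Ladd; case: (eqVneq (a j) 0) => [->|aj]; first by rewrite add0r; right.
by move=> _; left.
Qed.

Lemma fin_mul (a b : L) : is_laurent a -> is_laurent b -> is_laurent (Lmul a b).
Proof.
move=> ha hb; apply: (sub_finite_set _ (finite_image2 (fun x y => x + y) ha hb)).
move=> j /= /(@fsbigN1 _ _ _ unit int setT (fun _ i => a i * b (j - i)) tt) [i _ nz]; exists i; first by apply: contra_neq nz => ->; rewrite mul0r.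
by exists (j - i); [apply: contra_neq nz => ->; rewrite mulr0 | rewrite addrC subrK].
Qed.

Lemma mulDr (a b c : L) : is_laurent a -> Lmul a (Ladd b c) = Ladd (Lmul a b) (Lmul a c).
Proof.
move=> ha; apply/funext => j; rewrite /Ladd !mulE -fsbig_split //.
by apply: eq_fsbigr => i _; rewrite mulrDr.
Qed.

Lemma mulA (a b c : L) : is_laurent a -> is_laurent c ->
  Lmul (Lmul a b) c = Lmul a (Lmul b c).
Proof.
move=> ha hc; apply/funext => j.
pose Sc := [set i | c (j - i) != 0].
have fSc : finite_set Sc.
  exact: (@fin_set_comp c (fun i => j - i) (fun i => j - i) (fun x => subsub x j) hc).
have vSc : forall (F : int -> C) i, ~ Sc i -> F i * c (j - i) = 0.
  by move=> F i /negP; rewrite /Sc /= negbK => /eqP ->; rewrite mulr0.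
rewrite {1}/Lmul (@sumT_sub _ Sc); last exact: vSc.
under eq_fsbigr => i _ do rewrite mulE mulr_fsuml.
rewrite exchange_fsbig //.
rewrite [RHS]mulE; apply: eq_fsbigr => l _.
under eq_fsbigr => i _ do rewrite -mulrA.
rewrite -mulr_fsumr -(@sumT_sub _ Sc); last first.
  by move=> i /negP; rewrite /Sc /= negbK => /eqP ->; rewrite mulr0.
congr (_ * _); rewrite /Lmul (reindex_fsbigT (fun m => m + l)).
  by apply: eq_fsbigr => m _; rewrite addrK opprD addrA addrAC.
by exists (fun m => m - l) => m; rewrite ?addrK ?subrK.
Qed.

Definition dc (k : int) (c : C) : L := fun j => if j == k then c else 0.

Lemma fin_dc k c : is_laurent (dc k c).
Proof.
apply: (@sub_finite_set _ _ [set k]); last exact: finite_set1.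
by move=> j /=; rewrite /dc; case: (eqVneq j k) => [-> //|_]; rewrite eqxx.
Qed.

Lemma mul_dc k c f : Lmul (dc k c) f = fun j => c * f (j - k).
Proof.
apply/funext => j; rewrite /Lmul (@sumT_sub _ [set k]).
  by rewrite fsbig_set1 /dc eqxx.
by move=> i /= nik; rewrite /dc ifN ?mul0r //; apply/eqP.
Qed.

Definition Lneg (f : L) : L := fun j => - f j.

Lemma fin_neg f : is_laurent f -> is_laurent (Lneg f).
Proof. by move=> hf; apply: (sub_finite_set _ hf) => j /=; rewrite /Lneg oppr_eq0. Qed.

Record lpoly := LPoly { lval : L ; lfin : is_laurent lval }.

Lemma lval_inj x y : lval x = lval y -> x = y.
Proof. by case: x y => f hf [g hg] /= e; subst g; congr LPoly; apply: Prop_irrelevance. Qed.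

HB.instance Definition _ := gen_eqMixin lpoly.
HB.instance Definition _ := gen_choiceMixin lpoly.

Definition ladd x y := LPoly (fin_add (lfin x) (lfin y)).
Definition lneg x := LPoly (fin_neg (lfin x)).
Definition lzero := LPoly (fin_dc 0 0).
Definition lmul x y := LPoly (fin_mul (lfin x) (lfin y)).
Definition lone := LPoly (fin_dc 0 1).

Lemma laddA : associative ladd.
Proof. by move=> x y z; apply: lval_inj; apply/funext => j; rewrite /= /Ladd addrA. Qed.
Lemma laddC : commutative ladd.
Proof. by move=> x y; apply: lval_inj; apply/funext => j; rewrite /= /Ladd addrC. Qed.
Lemma ladd0 : left_id lzero ladd.
Proof. by move=> x; apply: lval_inj; apply/funext => j; rewrite /= /Ladd /dc; case: ifP; rewrite add0r. Qed.
Lemma laddN : left_inverse lzero lneg ladd.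
Proof. by move=> x; apply: lval_inj; apply/funext => j; rewrite /= /Ladd /Lneg /dc addNr; case: ifP. Qed.

HB.instance Definition _ := GRing.isZmodule.Build lpoly laddA laddC ladd0 laddN.

Lemma lmulA : associative lmul.
Proof. by move=> x y z; apply: lval_inj; rewrite /= mulA //; apply: lfin. Qed.
Lemma lmulC : commutative lmul.
Proof. by move=> x y; apply: lval_inj; rewrite /= mulC. Qed.
Lemma lmul1 : left_id lone lmul.
Proof. by move=> x; apply: lval_inj; rewrite /= mul_dc; apply/funext => j; rewrite mul1r subr0. Qed.
Lemma lmulDl : left_distributive lmul ladd.
Proof.
move=> x y z; apply: lval_inj; rewrite /= mulC mulDr; last exact: lfin.
by rewrite mulC [Lmul (lval z) _]mulC.
Qed.
Lemma lone_neq0 : lone != lzero.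
Proof.
apply/eqP => e; have := congr1 (fun x => lval x 0) e; rewrite /= /dc eqxx.
by move/eqP; rewrite oner_eq0.
Qed.

HB.instance Definition _ := GRing.Zmodule_isComNzRing.Build lpoly lmulA lmulC lmul1 lmulDl lone_neq0.


Lemma N1z_neq0 : (-1 : C) != 0.
Proof. by rewrite oppr_eq0 oner_eq0. Qed.

Lemma N1zD (m n : int) : (-1 : C) ^ (m + n) = (-1) ^ m * (-1) ^ n.
Proof. exact: expfzDr N1z_neq0. Qed.

Lemma N1zN (m : int) : (-1 : C) ^ (- m) = (-1) ^ m.
Proof. by rewrite !expN1r abszN. Qed.

Lemma N1z_conj (m : int) : ((-1 : C) ^ m)^* = (-1) ^ m.
Proof. by rewrite expN1r rmorphXn rmorphN1. Qed.


Lemma fin_conj (f : L) : is_laurent f -> is_laurent (Lconj f).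
Proof.
move=> hf; apply: (sub_finite_set _ (@fin_comp f (fun j => - j) (fun j => - j) (@opprK _) hf)).
by move=> j /=; rewrite /Lconj; apply: contra_neq => ->; rewrite conjc0.
Qed.

Lemma fin_tilde (f : L) : is_laurent f -> is_laurent (Ltilde f).
Proof.
by move=> hf; apply: (sub_finite_set _ hf) => j /=; rewrite /Ltilde; apply: contra_neq => ->; rewrite mulr0.
Qed.

Lemma conjM (a b : L) : is_laurent a -> Lconj (Lmul a b) = Lmul (Lconj a) (Lconj b).
Proof.
move=> ha; apply/funext => j; rewrite /Lconj mulE.
rewrite (@fsbig_finite _ _ _ _ (supp a)) // rmorph_sum /= -fsbig_finite //.
rewrite -(@sumT_sub _ (supp a)); last first.
  by move=> i /negP; rewrite /supp /= negbK => /eqP ->; rewrite mul0r conjc0.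
rewrite /Lmul [RHS](reindex_fsbigT (fun i => - i)); last by exists (fun i => - i) => i; rewrite opprK.
by apply: eq_fsbigr => i _; rewrite rmorphM !opprK opprD.
Qed.

Lemma tildeM (a b : L) : is_laurent a -> Ltilde (Lmul a b) = Lmul (Ltilde a) (Ltilde b).
Proof.
move=> ha; apply/funext => j; rewrite /Ltilde /Lmul mulr_fsumr.
apply: eq_fsbigr => i _; rewrite -{1}(subrKC i j) N1zD.
by rewrite mulrACA.
Qed.

Lemma tilde_conj (f : L) : Ltilde (Lconj f) = Lconj (Ltilde f).
Proof. by apply/funext => j; rewrite /Ltilde /Lconj rmorphM /= N1z_conj N1zN. Qed.


Definition lconj (x : lpoly) := LPoly (fin_conj (lfin x)).
Definition ltilde (x : lpoly) := LPoly (fin_tilde (lfin x)).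
Definition cst (c : C) := LPoly (fin_dc 0 c).
Definition mono (k : int) := LPoly (fin_dc k 1).
Definition lint (x : lpoly) := lval x 0.

Lemma lvalD x y : lval (x + y) = Ladd (lval x) (lval y). Proof. by []. Qed.
Lemma lvalN x : lval (- x) = Lneg (lval x). Proof. by []. Qed.
Lemma lvalM x y : lval (x * y) = Lmul (lval x) (lval y). Proof. by []. Qed.
Lemma lval_cst c x : lval (cst c * x) = Lscale c (lval x).
Proof. by rewrite lvalM /= mul_dc; apply/funext => j; rewrite subr0. Qed.
Lemma lval_mono k x : lval (mono k * x) = Lshift k (lval x).
Proof. by rewrite lvalM /= mul_dc; apply/funext => j; rewrite mul1r. Qed.

Lemma lconjD x y : lconj (x + y) = lconj x + lconj y.
Proof. by apply: lval_inj; apply/funext => j; rewrite /= /Lconj /Ladd rmorphD. Qed.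
Lemma lconjN x : lconj (- x) = - lconj x.
Proof. by apply: lval_inj; apply/funext => j; rewrite /= /Lconj /Lneg rmorphN. Qed.
Lemma lconjM x y : lconj (x * y) = lconj x * lconj y.
Proof. by apply: lval_inj; rewrite /= conjM //; apply: lfin. Qed.
Lemma lconjK x : lconj (lconj x) = x.
Proof. by apply: lval_inj; apply/funext => j; rewrite /= /Lconj opprK conjcK. Qed.
Lemma lconj_cst c : lconj (cst c) = cst (c^*).
Proof.
apply: lval_inj; apply/funext => j; rewrite /= /Lconj /dc oppr_eq0.
by case: ifP; rewrite ?conjc0.
Qed.
Lemma lconj_mono k : lconj (mono k) = mono (- k).
Proof.
apply: lval_inj; apply/funext => j; rewrite /= /Lconj /dc eqr_oppLR.
by case: ifP; rewrite ?conjc0 ?conjc1.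
Qed.
Lemma ltildeD x y : ltilde (x + y) = ltilde x + ltilde y.
Proof. by apply: lval_inj; apply/funext => j; rewrite /= /Ltilde /Ladd mulrDr. Qed.
Lemma ltildeM x y : ltilde (x * y) = ltilde x * ltilde y.
Proof. by apply: lval_inj; rewrite /= tildeM //; apply: lfin. Qed.
Lemma ltildeK x : ltilde (ltilde x) = x.
Proof.
by apply: lval_inj; apply/funext => j; rewrite /= /Ltilde mulrA -exprzMl ?unitrN1 // mulrNN mulr1 exp1rz mul1r.
Qed.
Lemma ltilde_conj x : ltilde (lconj x) = lconj (ltilde x).
Proof. by apply: lval_inj; rewrite /= tilde_conj. Qed.

Lemma mono_add k l : mono k * mono l = mono (k + l).
Proof.
apply: lval_inj; rewrite lval_mono; apply/funext => j; rewrite /Lshift /= /dc.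
by rewrite subr_eq addrC.
Qed.
Lemma mono0 : mono 0 = 1.
Proof. by []. Qed.
Lemma cstM c d : cst c * cst d = cst (c * d).
Proof.
apply: lval_inj; rewrite lval_cst; apply/funext => j; rewrite /Lscale /= /dc.
by case: ifP; rewrite ?mulr0.
Qed.
Lemma cst1 : cst 1 = 1. Proof. by []. Qed.
Lemma cstN c : cst (- c) = - cst c.
Proof. by apply: lval_inj; apply/funext => j; rewrite /= /Lneg /dc; case: ifP; rewrite ?oppr0. Qed.

Lemma lintD x y : lint (x + y) = lint x + lint y. Proof. by []. Qed.
Lemma lintN x : lint (- x) = - lint x. Proof. by []. Qed.
Lemma lint_cst c x : lint (cst c * x) = c * lint x.
Proof. by rewrite /lint lval_cst. Qed.
Lemma lint_tilde x : lint (ltilde x) = lint x.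
Proof. by rewrite /lint /= /Ltilde expr0z mul1r. Qed.
Lemma lint_conj x : lint (lconj x) = (lint x)^*.
Proof. by rewrite /lint /= /Lconj oppr0. Qed.

Lemma Lnorm2E x : Lnorm2 (lval x) = lint (x * lconj x).
Proof.
rewrite /lint lvalM /Lmul /Lnorm2; apply: eq_fsbigr => i _.
by rewrite /= /Lconj sub0r opprK normCK.
Qed.


Lemma lvalT x : lval (ltilde x) = Ltilde (lval x). Proof. by []. Qed.
Lemma lvalC x : lval (lconj x) = Lconj (lval x). Proof. by []. Qed.
Lemma LintE x : Lint (lval x) = lint x. Proof. by []. Qed.

Lemma ReE' (x : C) : 'Re x = (x + x^*%C) / 2.
Proof. exact: ReE. Qed.

Lemma sq_sign (c : C) : c = 1 \/ c = -1 -> c * c = 1 /\ c^*%C = c.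
Proof. by case=> ->; rewrite ?mulr1 ?mulrNN ?mulr1 ?conjc1 ?rmorphN1. Qed.

End LP.

Section M.
Variable R : realType.
Local Notation C := R[i].
Lemma main (a b : laurent R) (k : int) (sigma tau : R[i])
  (ha : is_laurent a) (hb : is_laurent b)
  (hsigma : sigma = 1 \/ sigma = -1) (htau : tau = 1 \/ tau = -1) :
  let I :=
    2^-1 * Lnorm2 (Lmul (Ladd a (Lscale sigma (Lshift k (Lconj (Ltilde a)))))
                        (Ladd b (Lscale tau (Lshift k (Lconj (Ltilde b))))))
  + 2^-1 * Lnorm2 (Lmul (Ladd (Ltilde a) (Lscale (- sigma) (Lshift k (Lconj a))))
                        (Ladd (Ltilde b) (Lscale (- tau) (Lshift k (Lconj b))))) in
  I = 2 * Lnorm2 (Lmul a b) + 2 * Lnorm2 (Lmul a (Ltilde b))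
      + 2 * sigma * tau
          * 'Re (Lint (Lmul (Lmul a (Ltilde a)) (Lconj (Lmul b (Ltilde b)))))
      + 2 * sigma * tau
          * 'Re (Lint (Lshift (- (2 * k)) (Lmul (Lmul a (Ltilde a)) (Lmul b (Ltilde b))))).
Proof.
move=> I; rewrite {}/I.
have -> : a = lval (LPoly ha) by [].
have -> : b = lval (LPoly hb) by [].
move: (LPoly ha) (LPoly hb) => A B.
have [sS sC] := sq_sign hsigma; have [tS tC] := sq_sign htau.
rewrite -?lvalT -?lvalC -?lval_mono -?lval_cst -?lvalD -?lvalM -?lvalC -?lval_mono.
rewrite !LintE !Lnorm2E !cstN.
rewrite !(lconjD, lconjM, lconj_cst, lconj_mono, lconjK, lconjN) sC tC.
rewrite -?lvalM !LintE.
have hSS : cst sigma * cst sigma = 1 by rewrite cstM sS.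
have hTT : cst tau * cst tau = 1 by rewrite cstM tS.
have hSS' : - cst sigma * - cst sigma = 1 by rewrite mulrNN.
have hTT' : - cst tau * - cst tau = 1 by rewrite mulrNN.
have hs : mono R k * mono R (- k) = 1 by rewrite mono_add subrr.
set a' := ltilde A; set b' := ltilde B; set ca := lconj A; set cb := lconj B.
set ca' := lconj a'; set cb' := lconj b'; set S := cst sigma; set T := cst tau.
set s := mono R k; set s' := mono R (-k).
have {}hs : s * s' = 1 by exact: hs.
have e1 : lint ((A + S*(s*ca')) * (B + T*(s*cb')) * ((ca + S*(s'*a')) * (cb + T*(s'*b')))) =
  lint ((A*ca + ca'*a' + S*(s*ca'*ca + s'*A*a')) * (B*cb + cb'*b' + T*(s*cb'*cb + s'*B*b'))).
  by congr lint; exact: expand4.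
have e2 : lint ((a' + - S * (s * ca)) * (b' + - T * (s * cb)) * ((ca' + - S * (s' * A)) * (cb' + - T * (s' * B)))) =
  lint ((a'*ca' + ca*A + - S*(s*ca*ca' + s'*a'*A)) * (b'*cb' + cb*B + - T*(s*cb*cb' + s'*b'*B))).
  by congr lint; exact: expand4.
rewrite e1 e2 {e1 e2}.
have e3 : lint ((A*ca + ca'*a' + S*(s*ca'*ca + s'*A*a')) * (B*cb + cb'*b' + T*(s*cb'*cb + s'*B*b'))) +
  lint ((a'*ca' + ca*A + - S*(s*ca*ca' + s'*a'*A)) * (b'*cb' + cb*B + - T*(s*cb*cb' + s'*b'*B))) =
  lint (A*ca*(B*cb) + A*ca*(b'*cb') + a'*ca'*(B*cb) + a'*ca'*(b'*cb') + (S*T)*(s*s*(ca*ca'*(cb*cb')) + ca*ca'*(B*b') + A*a'*(cb*cb') + s'*s'*(A*a'*(B*b')))) + lint (A*ca*(B*cb) + A*ca*(b'*cb') + a'*ca'*(B*cb) + a'*ca'*(b'*cb') + (S*T)*(s*s*(ca*ca'*(cb*cb')) + ca*ca'*(B*b') + A*a'*(cb*cb') + s'*s'*(A*a'*(B*b')))).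
  by rewrite -!lintD combine hs !mul1r.
rewrite -mulrDr e3.
have hST : S * T = cst (sigma * tau) by rewrite /S /T cstM.
have t3 : lint (a'*ca'*(B*cb)) = lint (A*ca*(b'*cb')).
  by rewrite /a' /b' /ca /cb /ca' /cb' -[RHS]lint_tilde !ltildeM !ltilde_conj ltildeK.
have t4 : lint (a'*ca'*(b'*cb')) = lint (A*ca*(B*cb)).
  by rewrite /a' /b' /ca /cb /ca' /cb' -[RHS]lint_tilde !ltildeM !ltilde_conj.
have t5 : lint (s*s*(ca*ca'*(cb*cb'))) = (lint (s'*s'*(A*a'*(B*b'))))^*.
  by rewrite /s /s' /ca /cb /ca' /cb' -lint_conj !lconjM !lconj_mono opprK.
have t6 : lint (ca*ca'*(B*b')) = (lint (A*a'*(cb*cb')))^*.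
  by rewrite /ca /cb /ca' /cb' -lint_conj !lconjM !lconjK.
have e5 : lint (A*ca*(B*cb) + A*ca*(b'*cb') + a'*ca'*(B*cb) + a'*ca'*(b'*cb') + (S*T)*(s*s*(ca*ca'*(cb*cb')) + ca*ca'*(B*b') + A*a'*(cb*cb') + s'*s'*(A*a'*(B*b')))) =
  lint (A*ca*(B*cb)) + lint (A*ca*(b'*cb')) + lint (A*ca*(b'*cb')) + lint (A*ca*(B*cb)) +
  sigma * tau * ((lint (s'*s'*(A*a'*(B*b'))))^* + (lint (A*a'*(cb*cb')))^* + lint (A*a'*(cb*cb')) + lint (s'*s'*(A*a'*(B*b')))).
  by rewrite !lintD hST lint_cst !lintD t3 t4 t5 t6.
have r1 : lint (A*B*(ca*cb)) = lint (A*ca*(B*cb)) by rewrite mulrACA.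
have r2 : lint (A*b'*(ca*cb')) = lint (A*ca*(b'*cb')) by rewrite mulrACA.
have r4 : mono R (-(2*k)) = s' * s'.
  by rewrite /s' mono_add; congr mono; ring.
rewrite e5 r1 r2 r4 !ReE'.
apply: final_id.
by rewrite pnatr_eq0.
Qed.
End M.

Unset Implicit Arguments. Set Strict Implicit.

Theorem lemma2p10 (R : realType) (a b : laurent R) (k : int) (sigma tau : R[i])
  (ha : is_laurent a) (hb : is_laurent b)
  (hsigma : sigma = 1 \/ sigma = -1) (htau : tau = 1 \/ tau = -1) :
  let I :=
    2^-1 * Lnorm2 (Lmul (Ladd a (Lscale sigma (Lshift k (Lconj (Ltilde a)))))
                        (Ladd b (Lscale tau (Lshift k (Lconj (Ltilde b))))))
  + 2^-1 * Lnorm2 (Lmul (Ladd (Ltilde a) (Lscale (- sigma) (Lshift k (Lconj a))))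
                        (Ladd (Ltilde b) (Lscale (- tau) (Lshift k (Lconj b))))) in
  I = 2 * Lnorm2 (Lmul a b) + 2 * Lnorm2 (Lmul a (Ltilde b))
      + 2 * sigma * tau
          * 'Re (Lint (Lmul (Lmul a (Ltilde a)) (Lconj (Lmul b (Ltilde b)))))
      + 2 * sigma * tau
          * 'Re (Lint (Lshift (- (2 * k)) (Lmul (Lmul a (Ltilde a)) (Lmul b (Ltilde b))))).
Proof. exact: (@main R a b k sigma tau ha hb hsigma htau). Qed.
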